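(* There is an absolute constant $C>0$ such that the following holds. Let $\delta > 0$ and let $n$ be an integer with $n \geq \delta^{-2}$. Let $F$ be a $2$-edge-coloured graph on vertex set $[n]$ which contains no alternating cycle, and suppose that $$\sum_{i=1}^{n} |d^R(i) - d^B(i)| \leq \delta n^2.$$ Then $|E(F)| \leq C\delta^{1/2} n^2$.
   Context: A $2$-edge-coloured graph is a finite simple graph each of whose edges is coloured red or blue. For a vertex $i$, $d^R(i)$ (resp. $d^B(i)$) is the number of red (resp. blue) edges incident to $i$. An alternating cycle is a cycle whose consecutive edges have alternating colours. *)

(* Defs.v *)
From HB Require Import structures.
From mathcomp Require Import all_boot all_order all_algebra.
From mathcomp Require Import reals.
Set Implicit Arguments. Unset Strict Implicit. Unset Printing Implicit Defensive.
Import Order.TTheory GRing.Theory Num.Theory.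

Definition two_coloured_graph (n : nat) (red blue : rel 'I_n) : Prop :=
  [/\ symmetric red, symmetric blue, irreflexive red, irreflexive blue
    & forall x y, ~~ (red x y && blue x y)].

Definition edgeF (n : nat) (red blue : rel 'I_n) : rel 'I_n :=
  fun x y => red x y || blue x y.

Definition degR (n : nat) (red : rel 'I_n) (i : 'I_n) : nat := #|[set j | red i j]|.
Definition degB (n : nat) (blue : rel 'I_n) (i : 'I_n) : nat := #|[set j | blue i j]|.

Definition num_edges (n : nat) (red blue : rel 'I_n) : nat :=
  #|[set p : 'I_n * 'I_n | (p.1 < p.2)%N && edgeF red blue p.1 p.2]|.

Definition alternating_cycle (n : nat) (red blue : rel 'I_n) (s : seq 'I_n) : Prop :=
  let k := size s in
  [/\ (3 <= k)%N, uniq s &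
   forall (x0 : 'I_n) (i : nat), (i < k)%N ->
     let a := nth x0 s i in
     let b := nth x0 s ((i + 1) %% k) in
     let c := nth x0 s ((i + 2) %% k) in
     edgeF red blue a b /\ red a b <> red b c].

Definition has_alternating_cycle (n : nat) (red blue : rel 'I_n) : Prop :=
  exists s : seq 'I_n, alternating_cycle red blue s.

(* Main.v *)
Require Import Defs.
From HB Require Import structures.
From mathcomp Require Import all_boot all_order all_algebra.
From mathcomp Require Import reals.
From mathcomp Require Import lra ring zify.
Import Order.TTheory GRing.Theory Num.Theory.
Set Implicit Arguments. Unset Strict Implicit. Unset Printing Implicit Defensive.

Section Comb.
Variables (n : nat) (red blue : rel 'I_n).
Hypothesis Hg : two_coloured_graph red blue.
Hypothesis Hnc : ~ has_alternating_cycle red blue.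

Lemma red_sym i j : red i j = red j i.
Proof. by case: Hg => s _ _ _ _; apply: s. Qed.
Lemma blue_sym i j : blue i j = blue j i.
Proof. by case: Hg => _ s _ _ _; apply: s. Qed.
Lemma red_irr i : red i i = false.
Proof. by case: Hg => _ _ s _ _; apply: s. Qed.
Lemma blue_irr i : blue i i = false.
Proof. by case: Hg => _ _ _ s _; apply: s. Qed.
Lemma rb_excl i j : red i j -> blue i j = false.
Proof. by case: Hg => _ _ _ _ s; move: (s i j); case: (red i j); case: (blue i j). Qed.

Definition cr (X : {set 'I_n}) i j := (i \in X) != (j \in X).
Definition arc X i j := cr X i j && (if i \in X then red i j else blue i j).
Definition reach X i := [set j | connect (arc X) i j].
Definition outs X i := [set j | arc X i j].

Lemma arc_irr X i : arc X i i = false.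
Proof. by rewrite /arc /cr eqxx. Qed.

Lemma arc_excl X u v : arc X u v -> arc X v u -> False.
Proof.
rewrite /arc /cr; case: (u \in X); case: (v \in X) => //= h1 h2.
  by rewrite blue_sym rb_excl in h2.
by rewrite blue_sym rb_excl in h1.
Qed.

Lemma arc_edge X u v : arc X u v -> edgeF red blue u v.
Proof. by rewrite /arc /edgeF; case: (u \in X) => /andP [_ ->] //; rewrite orbT. Qed.

Lemma arc_alt X a b c : arc X a b -> arc X b c -> red a b <> red b c.
Proof.
rewrite /arc /cr; case: (a \in X); case: (b \in X) => //= h1 /andP[_ h2].
  rewrite h1; case E: (red b c) => //; by rewrite (rb_excl E) in h2.
rewrite h2; case E: (red a b) => //; by rewrite (rb_excl E) in h1.
Qed.

Lemma cyc_nth (T : eqType) (e : rel T) (x : T) (p : seq T) (x0 : T) :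
  path e x (rcons p x) -> forall i, (i < (size p).+1)%N ->
  e (nth x0 (x :: p) i) (nth x0 (x :: p) ((i + 1) %% (size p).+1)).
Proof.
move=> /(pathP x0) H i hi.
have := H i; rewrite size_rcons => /(_ hi).
rewrite -rcons_cons nth_rcons /= hi nth_rcons.
case: (ltnP i (size p)) => hip.
  by rewrite modn_small ?addn1.
have -> : i = size p by apply/eqP; rewrite eqn_leq hip -ltnS hi.
by rewrite eqxx addn1 modnn.
Qed.

Lemma acyc X u v : arc X u v -> ~~ connect (arc X) v u.
Proof.
move=> huv; apply/negP => /connectP [p pp lp].
move: huv; rewrite lp; case/shortenP: pp => p' pp' up' _ huv.
apply: Hnc; exists (v :: p').
have Hc : path (arc X) v (rcons p' v) by rewrite rcons_path pp' huv.
have Hn := fun x0 => @cyc_nth _ _ _ _ x0 Hc.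
split.
- case: p' pp' up' huv {Hc Hn} => [|w [|w2 p2]] //=.
    by rewrite arc_irr.
  by rewrite andbT => h1 _ h2; case: (arc_excl h1 h2).
- exact: up'.
- move=> x0 i hi /=; split.
    by apply: (arc_edge (Hn x0 i hi)).
  apply: (@arc_alt X _ _ _ (Hn x0 i hi)).
  have hj : (((i + 1) %% (size p').+1) < (size p').+1)%N by rewrite ltn_mod.
  have := Hn x0 _ hj; congr (arc X _ (nth _ _ _)).
  by rewrite modnDml -addnA.
Qed.

Lemma antisym X w w' : w != w' -> connect (arc X) w w' -> connect (arc X) w' w -> False.
Proof.
move=> ne /connectP [[|w1 p] /= pp lp]; first by rewrite lp eqxx in ne.
case/andP: pp => a1 pp c2.
have c1 : connect (arc X) w1 w'. by apply/connectP; exists p.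
have := acyc a1; rewrite (connect_trans c1 c2) //.
Qed.

Lemma in_reach X i j : (j \in reach X i) = connect (arc X) i j.
Proof. by rewrite inE. Qed.
Lemma in_outs X i j : (j \in outs X i) = arc X i j.
Proof. by rewrite inE. Qed.

Lemma step1 X v w : w \in outs X v ->
  (#|reach X w| + 1 + #|outs X v :\: reach X w| <= #|reach X v|)%N.
Proof.
rewrite in_outs => avw.
set O := outs X v; set Rw := reach X w.
have vO : v \notin O by rewrite in_outs arc_irr.
have vR : v \notin Rw by rewrite in_reach (acyc avw).
set A := v |: (O :\: Rw).
have cA : #|A| = (1 + #|O :\: Rw|)%N by rewrite cardsU1 inE (negbTE vO) andbF.
have dA : A :&: Rw = set0.
  apply/setP => x; rewrite !inE; apply/negP => /andP [/orP [/eqP -> | /andP [h _]] h2].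
    by rewrite (negbTE (acyc avw)) in h2.
  by rewrite h2 in h.
have sub : A :|: Rw \subset reach X v.
  apply/subsetP => x; rewrite !inE => /orP [/orP [/eqP -> | /andP [_ h]] | h].
  - exact: connect0.
  - by apply: connect1; move: h; rewrite ?inE.
  - by apply: connect_trans h; apply: connect1.
have := subset_leq_card sub; rewrite cardsU dA cards0 subn0 cA.
by rewrite addnC addnA.
Qed.

Lemma cardD_sum (O Q : {set 'I_n}) :
  #|O :\: Q| = (\sum_(x in O) (x \notin Q))%N.
Proof.
rewrite -sum1_card big_mkcond [RHS]big_mkcond /=.
by apply: eq_bigr => x _; rewrite inE andbC; case: (x \in O); case: (x \in Q).
Qed.

Lemma step2 X v :
  (#|outs X v| * #|outs X v| <= 2 * (\sum_(w in outs X v) #|outs X v :\: reach X w|) + #|outs X v|)%N.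
Proof.
set Ov := outs X v.
have H1 : (#|Ov| * #|Ov| = \sum_(w in Ov) \sum_(w' in Ov) 1)%N.
  by rewrite -sum1_card big_distrl /=; apply: eq_bigr => i _; rewrite mul1n sum1_card.
have H2 : (\sum_(w in Ov) \sum_(w' in Ov) 1 <=
   \sum_(w in Ov) \sum_(w' in Ov) ((w' \notin reach X w) + (w \notin reach X w') + (w == w')))%N.
  apply: leq_sum => w _; apply: leq_sum => w' _.
  case: (eqVneq w w') => [->|ne]; first by rewrite addn1.
  rewrite addn0 !in_reach.
  case c1: (connect _ w w'); case c2: (connect _ w' w) => //.
  by case: (antisym ne c1 c2).
rewrite H1; apply: (leq_trans H2).
under eq_bigr => w _ do rewrite !big_split /=.
rewrite !big_split /=.
have E1 : (\sum_(w in Ov) \sum_(w' in Ov) (w' \notin reach X w) =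
           \sum_(w in Ov) #|Ov :\: reach X w|)%N.
  by apply: eq_bigr => w _; rewrite cardD_sum.
have E2 : (\sum_(w in Ov) \sum_(w' in Ov) (w \notin reach X w') =
           \sum_(w in Ov) \sum_(w' in Ov) (w' \notin reach X w))%N.
  by rewrite exchange_big.
have E3 : (\sum_(w in Ov) \sum_(w' in Ov) (w == w') = #|Ov|)%N.
  rewrite -sum1_card; apply: eq_bigr => w wO.
  by rewrite (bigD1 w) //= eqxx big1 // => w' /andP [_ /negbTE]; rewrite eq_sym => ->.
by rewrite E2 E1 E3 addnn mul2n.
Qed.

Lemma vertex_ineq X v :
  (#|outs X v| * #|outs X v|.+1 + 2 * \sum_(w in outs X v) #|reach X w| <= 2 * #|outs X v| * #|reach X v|)%N.
Proof.
set Ov := outs X v.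
have S1 : (\sum_(w in Ov) (#|reach X w| + 1 + #|Ov :\: reach X w|) <= #|Ov| * #|reach X v|)%N.
  rewrite -sum1_card big_distrl /=; apply: leq_sum => w wO; rewrite mul1n; exact: step1.
rewrite !big_split /= sum1_card in S1.
have S2 := step2 X v; rewrite -/Ov in S2.
set a := (\sum_(w in Ov) #|reach X w|)%N in S1 *.
set b := (\sum_(w in Ov) #|Ov :\: reach X w|)%N in S1 S2.
set f := #|Ov| in S1 S2 *.
set r := #|reach X v| in S1 *.
nia.
Qed.

Section Real.
Variable R : realType.
Local Open Scope ring_scope.

Definition chi i j : R := (red i j)%:R - (blue i j)%:R.
Definition DX (X : {set 'I_n}) v : R := \sum_j (cr X v j)%:R * chi v j.
Definition sg (X : {set 'I_n}) v : R := if v \in X then 1 else -1.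

Lemma sg_key X v w :
  sg X v * ((cr X v w)%:R * chi v w) = (arc X v w)%:R - (arc X w v)%:R.
Proof.
rewrite /sg /arc /cr /chi red_sym blue_sym.
case Er: (red w v); case Eb: (blue w v);
  try by rewrite (rb_excl Er) in Eb.
all: case: (v \in X); case: (w \in X) => /=; lra.
Qed.

Lemma cs_sum (T : finType) (a : T -> R) :
  (\sum_i a i) ^+ 2 <= #|T|%:R * \sum_i (a i) ^+ 2.
Proof.
have H : 0 <= \sum_i \sum_j (a i - a j) ^+ 2.
  by apply: sumr_ge0 => i _; apply: sumr_ge0 => j _; apply: sqr_ge0.
have E : \sum_i \sum_j (a i - a j) ^+ 2 =
   \sum_i \sum_j (a i ^+ 2 + a j ^+ 2 - 2 * (a i * a j)).
  by apply: eq_bigr => i _; apply: eq_bigr => j _; ring.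
rewrite E in H.
have S1 : forall i, \sum_j (a i ^+2 + a j ^+2 - 2 * (a i * a j)) =
   \sum_(j : T) a i ^+2 + \sum_j a j^+2 - \sum_j 2 * (a i * a j).
  by move=> i; rewrite sumrB big_split.
rewrite (eq_bigr _ (fun i _ => S1 i)) sumrB big_split /= in H.
have U1 : \sum_i \sum_(j : T) a i ^+2 = #|T|%:R * \sum_i a i ^+2.
  by rewrite mulr_sumr; apply: eq_bigr => i _; rewrite sumr_const mulr_natl.
have U2 : \sum_(i : T) \sum_j a j ^+2 = #|T|%:R * \sum_i a i ^+2.
  by rewrite sumr_const mulr_natl.
have U3 : \sum_i \sum_j 2 * (a i * a j) = 2 * (\sum_i a i)^+2.
  rewrite expr2 mulr_suml mulr_sumr; apply: eq_bigr => i _.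
  by rewrite !mulr_sumr.
rewrite U1 U2 U3 in H; lra.
Qed.

Definition phi X v : R := (#|reach X v|)%:R.

Lemma sum_phi X :
  \sum_v \sum_(w in outs X v) (phi X v - phi X w) =
  \sum_v phi X v * (sg X v * DX X v).
Proof.
have L : \sum_v \sum_(w in outs X v) (phi X v - phi X w) =
   \sum_v \sum_w ((arc X v w)%:R * phi X v) - \sum_v \sum_w ((arc X w v)%:R * phi X v).
  rewrite [X in _ = _ - X]exchange_big /= -sumrB; apply: eq_bigr => v _.
  rewrite -sumrB big_mkcond /=; apply: eq_bigr => w _; rewrite in_outs.
  by case: (arc X v w) => /=; lra.
rewrite L -sumrB; apply: eq_bigr => v _.
rewrite /DX !mulr_sumr -sumrB; apply: eq_bigr => w _.
by rewrite sg_key; lra.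
Qed.

Lemma phi_le X v : phi X v <= n%:R.
Proof. by rewrite /phi ler_nat; apply: leq_trans (max_card _) _; rewrite card_ord. Qed.

Lemma bip X : (\sum_v (#|outs X v|)%:R) ^+ 2 <= 2 * n%:R ^+ 2 * \sum_v `|DX X v|.
Proof.
have C := cs_sum (fun v => (#|outs X v|)%:R : R); rewrite card_ord in C.
have h1 : \sum_v ((#|outs X v|)%:R : R) ^+ 2 <=
     2 * \sum_v \sum_(w in outs X v) (phi X v - phi X w).
  rewrite mulr_sumr; apply: ler_sum => v _.
  have V := vertex_ineq X v.
  have V' : ((#|outs X v| * #|outs X v|.+1 + 2 * \sum_(w in outs X v) #|reach X w|)%:R
        <= ((2 * #|outs X v| * #|reach X v|)%:R : R)) by rewrite ler_nat.
  rewrite !natrD !natrM natr_sum in V'.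
  rewrite sumrB sumr_const /phi.
  set f := (#|outs X v|)%:R in V' *. set r := (#|reach X v|)%:R in V' *.
  set s := \sum_(i in outs X v) (#|reach X i|)%:R in V' *.
  rewrite -[r *+ _]mulr_natl -/f.
  have f0 : 0 <= f by rewrite ler0n.
  nra.
have h2 : \sum_v phi X v * (sg X v * DX X v) <= n%:R * \sum_v `|DX X v|.
  rewrite mulr_sumr; apply: ler_sum => v _.
  have p0 : 0 <= phi X v by rewrite /phi ler0n.
  have s1 : sg X v * DX X v <= `|DX X v|.
    rewrite /sg; case: (v \in X); rewrite ?mul1r ?mulN1r ?ler_norm //.
    by rewrite -normrN ler_norm.
  apply: le_trans (ler_wpM2l p0 s1) _.
  exact: (ler_wpM2r (normr_ge0 _) (phi_le X v)).
rewrite sum_phi in h1.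
have n0 : 0 <= (n%:R : R) by rewrite ler0n.
have : n%:R * \sum_v ((#|outs X v|)%:R : R) ^+ 2 <= n%:R * (2 * (n%:R * \sum_v `|DX X v|)).
  apply: (ler_wpM2l n0); apply: le_trans h1 _; lra.
move=> h3; apply: le_trans C _; apply: le_trans h3 _; lra.
Qed.

Definition tog (u : 'I_n) (X : {set 'I_n}) : {set 'I_n} := [set x | (x \in X) (+) (x == u)].

Lemma togK u : involutive (tog u).
Proof. by move=> X; apply/setP => x; rewrite !inE addbK. Qed.

Lemma sum_tog u (F : {set 'I_n} -> R) : \sum_X F X = \sum_X F (tog u X).
Proof. by rewrite (reindex_inj (can_inj (togK u))). Qed.

Definition eta X v w : R := (cr X v w)%:R - 2^-1.

Lemma eta_tog X v w : v != w -> eta (tog w X) v w = - eta X v w.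
Proof.
move=> ne; rewrite /eta /cr !inE eqxx (negbTE ne) addbF addbT.
by case: (v \in X); case: (w \in X) => /=; lra.
Qed.

Lemma eta_tog2 X u v w : w != u -> v != u -> eta (tog u X) v w = eta X v w.
Proof. by move=> h1 h2; rewrite /eta /cr !inE (negbTE h1) (negbTE h2) !addbF. Qed.

Lemma sum_eta v w : v != w -> \sum_X eta X v w = 0.
Proof.
move=> ne; have E := sum_tog w (fun X => eta X v w).
have E2 : \sum_X eta (tog w X) v w = \sum_X - eta X v w.
  by apply: eq_bigr => X _; rewrite eta_tog.
rewrite /= E2 sumrN in E; lra.
Qed.

Lemma sum_eta2 v w w' : w != w' -> v != w -> v != w' ->
  \sum_X eta X v w * eta X v w' = 0.
Proof.
move=> h1 h2 h3; have E := sum_tog w (fun X => eta X v w * eta X v w').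
have E2 : \sum_X eta (tog w X) v w * eta (tog w X) v w' = \sum_X - (eta X v w * eta X v w').
  by apply: eq_bigr => X _; rewrite eta_tog // eta_tog2 // 1?eq_sym // mulNr.
rewrite /= E2 sumrN in E; lra.
Qed.

Lemma eta_sq X v w : eta X v w ^+ 2 = 4^-1.
Proof. by rewrite /eta; case: (cr X v w) => /=; field. Qed.

Definition M : R := (#|{set 'I_n}|)%:R.

Lemma sum_cr v w : v != w -> \sum_X ((cr X v w)%:R : R) = M / 2.
Proof.
move=> ne; have := sum_eta ne; rewrite /eta sumrB sumr_const /M -mulr_natl.
move=> h; have -> : \sum_X ((cr X v w)%:R : R) = (#|{set 'I_n}|)%:R * 2^-1 by lra.
by rewrite /M mulr1.
Qed.

Definition D v : R := \sum_w chi v w.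
Definition Dl X v : R := \sum_w eta X v w * chi v w.

Lemma chi_diag v : chi v v = 0.
Proof. by rewrite /chi red_irr blue_irr subrr. Qed.

Lemma chi_sq v w : chi v w ^+ 2 <= 1.
Proof.
rewrite /chi; case Er: (red v w); case Eb: (blue v w) => /=; try lra.
Qed.

Lemma DX_split X v : DX X v = Dl X v + D v / 2.
Proof.
rewrite /DX /Dl /D mulr_suml -big_split /=; apply: eq_bigr => w _.
rewrite /eta; ring.
Qed.

Lemma sum_Dl_sq v : \sum_X Dl X v ^+ 2 <= M * n%:R / 4.
Proof.
have E : forall X, Dl X v ^+ 2 = \sum_w \sum_w' (eta X v w * chi v w) * (eta X v w' * chi v w').
  by move=> X; rewrite expr2 /Dl mulr_suml; apply: eq_bigr => w _; rewrite mulr_sumr.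
rewrite (eq_bigr _ (fun X _ => E X)) exchange_big /=.
have K : forall w w', \sum_X (eta X v w * chi v w) * (eta X v w' * chi v w') =
   if w == w' then chi v w ^+ 2 * (M / 4) else 0.
  move=> w w'; case: (eqVneq w w') => [<-|ne].
    rewrite (eq_bigr (fun X => chi v w ^+2 * 4^-1)); last first.
      by move=> X _; rewrite -(eta_sq X v w); ring.
    by rewrite sumr_const /M -mulr_natl; field.
  case: (eqVneq v w) => [<-|nvw]; first by rewrite big1 // => X _; rewrite chi_diag; ring.
  case: (eqVneq v w') => [<-|nvw']; first by rewrite big1 // => X _; rewrite chi_diag; ring.
  rewrite (eq_bigr (fun X => (chi v w * chi v w') * (eta X v w * eta X v w'))); last first.
    by move=> X _; ring.
  by rewrite -mulr_sumr sum_eta2 // mulr0.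
have K2 : forall w, \sum_X \sum_w' (eta X v w * chi v w) * (eta X v w' * chi v w') <= M / 4.
  move=> w; rewrite exchange_big /= (eq_bigr _ (fun w' _ => K w w')) /=.
  rewrite (bigD1 w) //= eqxx big1 ?addr0; last by move=> w' /negbTE; rewrite eq_sym => ->.
  have M0 : 0 <= M by rewrite /M ler0n.
  have := chi_sq v w; nra.
apply: le_trans (ler_sum _ (fun w _ => K2 w)) _.
by rewrite sumr_const card_ord -mulr_natl; lra.
Qed.

Lemma card_sum (T : finType) (P : pred T) : #|[set x | P x]| = (\sum_x (P x : nat))%N.
Proof.
rewrite -sum1_card big_mkcond /=; apply: eq_bigr => x _; rewrite inE; by case: (P x).
Qed.

Lemma edge_irr v : edgeF red blue v v = false.
Proof. by rewrite /edgeF red_irr blue_irr. Qed.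
Lemma edge_sym v w : edgeF red blue v w = edgeF red blue w v.
Proof. by rewrite /edgeF red_sym blue_sym. Qed.

Lemma sum_edges :
  (\sum_v \sum_w (edgeF red blue v w : nat) = 2 * num_edges red blue)%N.
Proof.
have P1 : forall v w, (edgeF red blue v w : nat) =
    (((v < w)%N && edgeF red blue v w) + ((w < v)%N && edgeF red blue v w))%N.
  move=> v w; case: (ltngtP v w) => h //=; first by rewrite addn0.
  have -> : v = w by apply/val_inj.
  by rewrite edge_irr.
have E : (\sum_v \sum_w (edgeF red blue v w : nat) =
    \sum_(v : 'I_n) (\sum_(w : 'I_n) ((v < w)%N && edgeF red blue v w) + \sum_(w : 'I_n) ((w < v)%N && edgeF red blue v w)))%N.
  by apply: eq_bigr => v _; rewrite -big_split; apply: eq_bigr => w _; apply: P1.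
rewrite E big_split /=.
have P2 : (\sum_(v : 'I_n) \sum_(w : 'I_n) ((w < v)%N && edgeF red blue v w) =
          \sum_(v : 'I_n) \sum_(w : 'I_n) ((v < w)%N && edgeF red blue v w))%N.
  by rewrite exchange_big /=; apply: eq_bigr => v _; apply: eq_bigr => w _; rewrite edge_sym.
rewrite P2 addnn -mul2n /num_edges card_sum pair_big /=.
by [].
Qed.

Lemma arc_pair X v w :
  ((arc X v w)%:R + (arc X w v)%:R : R) = (edgeF red blue v w)%:R * (cr X v w)%:R.
Proof.
rewrite /arc /cr /edgeF red_sym blue_sym.
case Er: (red w v); case Eb: (blue w v); try by rewrite (rb_excl Er) in Eb.
all: case: (v \in X); case: (w \in X) => /=; lra.
Qed.

Lemma sumA :
  \sum_X \sum_v ((#|outs X v|)%:R : R) = M / 2 * (num_edges red blue)%:R.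
Proof.
have E1 : \sum_X \sum_v ((#|outs X v|)%:R : R) = \sum_v \sum_w \sum_X ((arc X v w)%:R : R).
  rewrite exchange_big; apply: eq_bigr => v _.
  rewrite exchange_big; apply: eq_bigr => X _.
  by rewrite /outs card_sum natr_sum.
have E2 : \sum_v \sum_w \sum_X ((arc X w v)%:R : R) = \sum_v \sum_w \sum_X ((arc X v w)%:R : R).
  by rewrite exchange_big.
have E3 : \sum_v \sum_w \sum_X (((arc X v w)%:R + (arc X w v)%:R) : R) =
          M / 2 * (2 * (num_edges red blue)%:R).
  have -> : (2 * (num_edges red blue)%:R : R) = (2 * num_edges red blue)%N%:R by rewrite natrM.
  rewrite -sum_edges natr_sum mulr_sumr; apply: eq_bigr => v _.
  rewrite natr_sum mulr_sumr; apply: eq_bigr => w _.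
  rewrite (eq_bigr _ (fun X _ => arc_pair X v w)) -mulr_sumr.
  case: (eqVneq v w) => [<-|ne]; first by rewrite edge_irr !mul0r mulr0.
  by rewrite sum_cr // mulrC.
have E4 : \sum_v \sum_w \sum_X (((arc X v w)%:R + (arc X w v)%:R) : R) =
   \sum_v \sum_w \sum_X ((arc X v w)%:R : R) + \sum_v \sum_w \sum_X ((arc X w v)%:R : R).
  rewrite -big_split; apply: eq_bigr => v _; rewrite -big_split; apply: eq_bigr => w _.
  by rewrite big_split.
rewrite E1; rewrite E4 E2 in E3; lra.
Qed.

Lemma final_bound (delta : R) : 0 < delta -> delta ^-2 <= n%:R ->
  \sum_v `|D v| <= delta * n%:R ^+ 2 ->
  (num_edges red blue)%:R ^+ 2 <= 8 * delta * n%:R ^+ 4.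
Proof.
move=> d0 dn hI.
set E := ((num_edges red blue)%:R : R).
set I := \sum_v `|D v|.
set S := \sum_X \sum_v `|Dl X v|.
have hM : 0 < M.
  rewrite /M ltr0n; apply/card_gt0P; by exists set0.
have h5 : 1 <= delta ^+ 2 * n%:R.
  have d2 : 0 < delta ^+ 2 by rewrite exprn_gt0.
  have := ler_wpM2l (ltW d2) dn; rewrite mulfV ?gt_eqF //.
have n0 : 0 <= (n%:R : R) by rewrite ler0n.
have I0 : 0 <= I by apply: sumr_ge0 => v _; apply: normr_ge0.
have S0 : 0 <= S by apply: sumr_ge0 => X _; apply: sumr_ge0 => v _; apply: normr_ge0.
have h1 := cs_sum (fun X => \sum_v ((#|outs X v|)%:R : R)).
rewrite sumA -/E -/M in h1.
have h2 : \sum_X (\sum_v ((#|outs X v|)%:R : R)) ^+ 2 <=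
          2 * n%:R ^+ 2 * \sum_X \sum_v `|DX X v|.
  by rewrite mulr_sumr; apply: ler_sum => X _; apply: bip.
have h3 : \sum_X \sum_v `|DX X v| <= S + M * (I / 2).
  have e : \sum_X \sum_v (`|Dl X v| + `|D v| / 2) = S + M * (I / 2).
    under eq_bigr => X _ do rewrite big_split /=.
    rewrite big_split /= sumr_const -[_ *+ _]mulr_natl /I mulr_suml /S /M //.
  rewrite -e.
  apply: ler_sum => X _; apply: ler_sum => v _.
  rewrite DX_split; apply: le_trans (ler_normD _ _) _.
  by rewrite normrM [`|2^-1|]ger0_norm ?invr_ge0 ?ler0n.
have h4 : S ^+ 2 <= M * n%:R * (n%:R * (M * n%:R / 4)).
  have C : S ^+ 2 <= (M * n%:R) * \sum_X \sum_v `|Dl X v| ^+ 2.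
    have := cs_sum (fun p : ({set 'I_n} * 'I_n)%type => `|Dl p.1 p.2|).
    by rewrite card_prod card_ord natrM -/M /S !pair_bigA.
  apply: le_trans C _; apply: ler_wpM2l; first by apply: mulr_ge0; lra.
  rewrite exchange_big /=.
  have -> : n%:R * (M * n%:R / 4) = \sum_(v : 'I_n) (M * n%:R / 4).
    by rewrite sumr_const card_ord mulr_natl.
  apply: ler_sum => v _.
  rewrite (eq_bigr (fun X => Dl X v ^+ 2)); first exact: sum_Dl_sq.
  by move=> X _; rewrite real_normK ?num_real.
have h6 : S <= M * delta * n%:R ^+ 2 / 2.
  have K0 : 0 <= M * delta * n%:R ^+ 2 / 2 by apply: divr_ge0; [apply: mulr_ge0; [apply: mulr_ge0|apply: exprn_ge0]|]; lra.
  have : S ^+ 2 <= (M * delta * n%:R ^+ 2 / 2) ^+ 2.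
    apply: le_trans h4 _.
    have e : (M * delta * n%:R ^+ 2 / 2) ^+ 2 = M ^+ 2 * n%:R ^+ 3 / 4 * (delta ^+ 2 * n%:R).
      by field.
    rewrite e; have : 0 <= M ^+ 2 * n%:R ^+ 3 / 4.
      by apply: divr_ge0; [apply: mulr_ge0; apply: exprn_ge0|]; lra.
    move=> p0; have := ler_wpM2l p0 h5; rewrite mulr1 => q.
    apply: le_trans q; rewrite le_eqVlt; apply/orP; left; apply/eqP; by field.
  move=> h; nra.
have hI' : M * (I / 2) <= M * delta * n%:R ^+ 2 / 2.
  have := ler_wpM2l (ltW hM) hI; rewrite -/I => q; lra.
have key : (M / 2 * E) ^+ 2 <= M * (2 * n%:R ^+ 2 * (M * delta * n%:R ^+ 2)).
  apply: le_trans h1 _; apply: (ler_wpM2l (ltW hM)).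
  have t0 : 0 <= 2 * n%:R ^+ 2 :> R by apply: mulr_ge0; [|apply: exprn_ge0]; lra.
  apply: le_trans h2 _; apply: (ler_wpM2l t0).
  apply: le_trans h3 _; lra.
have e2 : (M / 2 * E) ^+ 2 = (M ^+ 2 / 4) * E ^+ 2 by field.
have e3 : M * (2 * n%:R ^+ 2 * (M * delta * n%:R ^+ 2)) = (M ^+ 2 / 4) * (8 * delta * n%:R ^+ 4).
  by field.
rewrite e2 e3 in key.
have M2 : 0 < M ^+ 2 / 4 by apply: divr_gt0; [apply: exprn_gt0|]; lra.
by rewrite ler_pM2l in key.
Qed.

End Real.
End Comb.

Unset Implicit Arguments. Set Strict Implicit.
Local Open Scope ring_scope.

Theorem lemma2p3 (R : realType) :
  exists C : R, 0 < C /\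
  forall (delta : R) (n : nat), 0 < delta -> delta ^-2 <= n%:R ->
  forall red blue : rel 'I_n,
    two_coloured_graph red blue ->
    ~ has_alternating_cycle red blue ->
    \sum_(i < n) `|(degR red i)%:R - (degB blue i)%:R| <= delta * n%:R ^+ 2 ->
    (num_edges red blue)%:R <= C * Num.sqrt delta * n%:R ^+ 2.
Proof.
exists 3; split; first lra.
move=> delta n d0 dn red blue Hg Hnc hs.
have eD : forall i, (degR red i)%:R - (degB blue i)%:R = D red blue R i.
  move=> i; rewrite /degR /degB !card_sum !natr_sum /D /chi -sumrB.
  by apply: eq_bigr.
rewrite (eq_bigr (fun i => `|D red blue R i|)) in hs; last by move=> i _; rewrite eD.
have H := final_bound Hg Hnc d0 dn hs.
set E := ((num_edges red blue)%:R : R) in H *.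
have E0 : 0 <= E by rewrite /E ler0n.
have s0 : 0 <= Num.sqrt delta by apply: sqrtr_ge0.
have sq : Num.sqrt delta ^+ 2 = delta by rewrite sqr_sqrtr // ltW.
have n0 : 0 <= (n%:R : R) by rewrite ler0n.
have K0 : 0 <= 3 * Num.sqrt delta * n%:R ^+ 2.
  by apply: mulr_ge0; [apply: mulr_ge0; lra|apply: exprn_ge0].
have : E ^+ 2 <= (3 * Num.sqrt delta * n%:R ^+ 2) ^+ 2.
  apply: le_trans H _.
  have -> : (3 * Num.sqrt delta * n%:R ^+ 2) ^+ 2 = 9 * Num.sqrt delta ^+ 2 * n%:R ^+ 4.
    by ring.
  rewrite sq.
  have : 0 <= delta * n%:R ^+ 4 by apply: mulr_ge0; [lra|apply: exprn_ge0].
  lra.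
move=> h; nra.
Qed.
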